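(* In the setting below, let $\tilde B_\circ$ be the $m\times n$ extended exchange matrix of the initial seed $(\mathbf{x}(t_\circ),\mathbf{y}(t_\circ),B(t_\circ))$ of the original pattern. Then the new initial seed $(\bar{\mathbf x}(t_\circ),\bar{\mathbf y}(t_\circ),B(t_\circ))$ has extended exchange matrix $\overline{\tilde B}_\circ=\Psi\tilde B_\circ$, where $\Psi=(\psi_{ij})$ is the $\bar m\times m$ integer matrix defined by $\psi(x_j)=\prod_{i=1}^{\bar m}\bar x_i^{\psi_{ij}}$. Setting: $n\le m$, $n\le\bar m$; $\mathcal F,\bar{\mathcal F}$ are the fields of rational functions in $x_1,\dots,x_m$ and $\bar x_1,\dots,\bar x_{\bar m}$; $\varphi:\mathbb{Q}_{\mathrm{sf}}(x_1,\dots,x_m)\to\mathrm{Trop}(\bar x_{n+1},\dots,\bar x_{\bar m})$ is a semifield homomorphism; $\psi:\mathbb{Q}_{\mathrm{sf}}(x_1,\dots,x_m)\to\mathbb{Q}_{\mathrm{sf}}(\bar x_1,\dots,\bar x_{\bar m})$ is the semifield homomorphism with $\psi(x_i)=\bar x_i\varphi(x_i)$ for $i\le n$, $\psi(x_i)=\varphi(x_i)$ for $i>n$; $(\mathbf{x}(t),\mathbf{y}(t),B(t))_{t\in\mathbb{T}_n}$ is a seed pattern in $\mathcal F$ with frozen variables $x_{n+1},\dots,x_m$ and initial cluster $\mathbf{x}(t_\circ)=(x_1,\dots,x_n)$; and $\bar x_{i;t}=\psi(x_{i;t})/\varphi(x_{i;t})$, $\bar y_{k;t}=\varphi(y_{k;t})\prod_{i=1}^n\varphi(x_{i;t})^{b^t_{ik}}$,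 which form a seed pattern in $\bar{\mathcal F}$ with frozen variables $\bar x_{n+1},\dots,\bar x_{\bar m}$.
   Context: $\mathbb{Q}_{\mathrm{sf}}(u_1,\dots,u_l)$ is the semifield of subtraction-free rational expressions; $\mathrm{Trop}(u_1,\dots,u_l)$ is the group of Laurent monomials with $\prod u_j^{a_j}\oplus\prod u_j^{b_j}=\prod u_j^{\min(a_j,b_j)}$. A seed pattern in $\mathcal F$ with frozen variables $x_{n+1},\dots,x_m$ assigns to each vertex $t$ of the $n$-regular tree $\mathbb{T}_n$ (edges labeled $1,\dots,n$, distinct labels at each vertex) a triple $(\mathbf{x}(t),\mathbf{y}(t),B(t))$ with $\mathbf{x}(t)=(x_{1;t},\dots,x_{n;t})$ such that $x_{1;t},\dots,x_{n;t},x_{n+1},\dots,x_m$ freely generate $\mathcal F$, $\mathbf y(t)=(y_{1;t},\dots,y_{n;t})\in\mathrm{Trop}(x_{n+1},\dots,x_m)^n$, $B(t)=(b^t_{ij})$ skew-symmetrizable, related along each edge $t\overset{k}{-}t'$ by matrix mutation $\mu_k$, tropical $y$-mutation ($y_{k;t'}=y_{k;t}^{-1}$, $y_{j;t'}=y_{j;t}y_{k;t}^{\max(b^t_{kj},0)}(y_{k;t}\oplus1)^{-b^t_{kj}}$ for $j\neq k$), $x_{i;t'}=x_{i;t}$ ($i\ne k$) and $x_{k;t}x_{k;t'}=(y_{k;t}\prod_{b^t_{ik}>0}x_{i;t}^{b^t_{ik}}+\prod_{b^t_{ik}<0}x_{i;t}^{-b^t_{ik}})/(y_{k;t}\oplus1)$.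 The extended exchange matrix of a seed $(\mathbf x,\mathbf y,B)$ with frozen variables $x_{n+1},\dots,x_m$ is the $m\times n$ matrix $\tilde B=(b_{ik})$ whose top $n\times n$ part is $B$ and whose remaining entries are determined by $y_k=\prod_{i=n+1}^m x_i^{b_{ik}}$ (and analogously with $\bar m$ and $\bar x_i$ for the new pattern). *)

(* Defs.v *)
From HB Require Import structures.
From mathcomp Require Import all_boot all_order all_algebra.
From mathcomp Require Import fraction.
From mathcomp Require Import mpoly.
Set Implicit Arguments. Unset Strict Implicit. Unset Printing Implicit Defensive.
Import Order.TTheory GRing.Theory Num.Theory.
Local Open Scope ring_scope.

Definition ratfun (N : nat) := {fraction {mpoly rat[N]}}.

Definition rvar (N : nat) (i : 'I_N) : ratfun N := @FracField.tofrac _ ('X_i).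

(* Q_sf(u_1,...,u_N): the rational functions given by subtraction-free
   rational expressions in the variables (closure of {1, u_i} under +, *, /). *)
Inductive subfree (N : nat) : ratfun N -> Prop :=
| sf_one : subfree 1
| sf_var (i : 'I_N) : subfree (rvar i)
| sf_add a b : subfree a -> subfree b -> subfree (a + b)
| sf_mul a b : subfree a -> subfree b -> subfree (a * b)
| sf_inv a : subfree a -> subfree a^-1.

(* Trop(u_{n+1},...,u_{n+q}): Laurent monomials prod_i u_{n+i}^{e_i},
   represented by their exponent vectors e : 'rV[int]_q. *)
Definition Trop (q : nat) := 'rV[int]_q.
Definition tmul q (a b : Trop q) : Trop q := a + b.
Definition tinv q (a : Trop q) : Trop q := - a.
Definition tone q : Trop q := 0.
Definition texp q (a : Trop q) (z : int) : Trop q := a *~ z.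
Definition tadd q (a b : Trop q) : Trop q :=
  \row_j Num.min (a 0 j) (b 0 j).
Definition tprod q (I : finType) (F : I -> Trop q) : Trop q := \sum_i F i.

Definition trop_embed (n q : nat) (e : Trop q) : ratfun (n + q) :=
  \prod_(i < q) (rvar (rshift n i)) ^ (e 0 i).

Definition sf_hom_trop (N q : nat) (f : ratfun N -> Trop q) : Prop :=
  [/\ f 1 = tone q,
      forall a b, subfree a -> subfree b -> f (a + b) = tadd (f a) (f b),
      forall a b, subfree a -> subfree b -> f (a * b) = tmul (f a) (f b)
    & forall a, subfree a -> f a^-1 = tinv (f a)].

Definition sf_hom (N M : nat) (f : ratfun N -> ratfun M) : Prop :=
  [/\ forall a, subfree a -> subfree (f a),
      f 1 = 1,
      forall a b, subfree a -> subfree b -> f (a + b) = f a + f b,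
      forall a b, subfree a -> subfree b -> f (a * b) = f a * f b
    & forall a, subfree a -> f a^-1 = (f a)^-1].

Definition skew_symmetrizable (n : nat) (B : 'M[int]_n) : Prop :=
  exists d : 'I_n -> int, (forall i, 0 < d i) /\
    forall i j, d i * B i j = - (d j * B j i).

(* Extended exchange matrix of a seed (x, y, B) with frozen variables indexed by
   the last p variables: top part B, bottom entries b_{n+i,k} determined by
   y_k = prod_i x_{n+i}^{b_{n+i,k}}. *)
Definition ext_exchange (n p : nat) (B : 'M[int]_n) (y : 'I_n -> Trop p)
  : 'M[int]_(n + p, n) :=
  col_mx B (\matrix_(i < p, k < n) (y k) 0 i).

Definition new_coeffs (n p q : nat) (phi : ratfun (n + p) -> Trop q)
  (B : 'M[int]_n) (y : 'I_n -> Trop p) : 'I_n -> Trop q :=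
  fun k => tmul (phi (trop_embed n (y k)))
                (tprod (fun i : 'I_n => texp (phi (rvar (lshift p i))) (B i k))).

(* Main.v *)
Require Import Defs.
From HB Require Import structures.
From mathcomp Require Import all_boot all_order all_algebra.
From mathcomp Require Import fraction.
From mathcomp Require Import mpoly.
From mathcomp Require Import zify.
Import Order.TTheory GRing.Theory Num.Theory.
Local Open Scope ring_scope.
Set Implicit Arguments. Unset Strict Implicit. Unset Printing Implicit Defensive.

Definition pz (z : int) : nat := match z with Posz k => k | Negz _ => 0 end.
Definition nz (z : int) : nat := match z with Posz _ => 0 | Negz k => k.+1 end.

Lemma pz_nz (z : int) : z = (pz z)%:Z - (nz z)%:Z.
Proof. by case: z => k //=; rewrite ?subr0 // NegzE sub0r. Qed.

Lemma exprz_pn (F : fieldType) (x : F) (z : int) : x ^ z = x ^+ pz z / x ^+ nz z.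
Proof. by case: z => k /=; rewrite ?expr0 ?invr1 ?mulr1 ?mul1r. Qed.

Lemma Xi_neq0 N (i : 'I_N) : ('X_i : {mpoly rat[N]}) != 0.
Proof.
apply/eqP => h; have := @mcoeffXU N rat i i; rewrite h mcoeff0 eqxx => /eqP.
by rewrite eq_sym oner_eq0.
Qed.

Lemma rvar_neq0 N (i : 'I_N) : rvar i != 0.
Proof. by rewrite /rvar tofrac_eq0 Xi_neq0. Qed.

Definition mono N (e : 'I_N -> nat) : {mpoly rat[N]} := 'X_[[multinom e i | i < N]].

Lemma prod_rvar_nat N (e : 'I_N -> nat) :
  \prod_(i < N) rvar i ^+ e i = tofrac (mono e).
Proof.
rewrite /mono mpolyXE_id rmorph_prod; apply: eq_bigr => i _.
by rewrite mnmE /rvar rmorphXn.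
Qed.

Lemma prod_rvar N (a : 'I_N -> int) :
  \prod_(i < N) rvar i ^ a i = tofrac (mono (fun i => pz (a i))) / tofrac (mono (fun i => nz (a i))).
Proof.
rewrite -!prod_rvar_nat -prodf_div; apply: eq_bigr => i _; exact: exprz_pn.
Qed.

Lemma mono_neq0 N e : @mono N e != 0.
Proof.
apply/eqP => h; have := @mcoeffX N rat [multinom e i | i < N] [multinom e i | i < N].
by rewrite -/(mono e) h mcoeff0 eqxx => /eqP; rewrite eq_sym oner_eq0.
Qed.

Lemma monoM N e f : @mono N e * mono f = mono (fun i => e i + f i)%N.
Proof.
rewrite /mono -mpolyXD; congr 'X_[_]; apply/mnmP => i.
by rewrite mnmDE !mnmE.
Qed.

Lemma mono_inj N e f : @mono N e = mono f -> forall i, e i = f i.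
Proof.
rewrite /mono => h i; have := @mcoeffX N rat [multinom e i | i < N] [multinom f i | i < N].
rewrite h mcoeffX eqxx; case: eqP => [E _|_ /eqP]; last by rewrite oner_eq0.
by have := congr1 (fun m : 'X_{1..N} => m i) E; rewrite /= !mnmE.
Qed.

Lemma prod_rvar_inj N (a b : 'I_N -> int) :
  \prod_(i < N) rvar i ^ a i = \prod_(i < N) rvar i ^ b i -> forall i, a i = b i.
Proof.
rewrite !prod_rvar => /eqP; rewrite eqr_div ?tofrac_eq0 ?mono_neq0 //.
rewrite -!tofracM tofrac_eq !monoM => /eqP h i.
have := mono_inj h i => /= e.
rewrite (pz_nz (a i)) (pz_nz (b i)); lia.
Qed.

Lemma subfree_exprn N (a : ratfun N) k : subfree a -> subfree (a ^+ k).
Proof. move=> ha; elim: k => [|k IH]; [exact: sf_one | rewrite exprS; exact: sf_mul]. Qed.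

Lemma subfree_exprz N (a : ratfun N) z : subfree a -> subfree (a ^ z).
Proof. by move=> ha; case: z => k /=; [exact: subfree_exprn | apply: sf_inv; exact: subfree_exprn]. Qed.

Lemma phi_exprz N q (phi : ratfun N -> Trop q) (a : ratfun N) z :
  sf_hom_trop phi -> subfree a -> phi (a ^ z) = phi a *~ z.
Proof.
case=> h1 _ hM hV ha.
have hn k : phi (a ^+ k) = phi a *+ k.
  elim: k => [|k IH]; first by rewrite expr0 h1.
  by rewrite exprS hM ?IH ?mulrS //; exact: subfree_exprn.
case: z => k /=; first exact: hn.
by rewrite hV ?hn //; exact: subfree_exprn.
Qed.

Lemma phi_prod N q (phi : ratfun N -> Trop q) k (F : 'I_k -> ratfun N) (e : 'I_k -> int) :
  sf_hom_trop phi -> (forall i, subfree (F i)) ->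
  phi (\prod_(i < k) F i ^ e i) = \sum_(i < k) phi (F i) *~ e i.
Proof.
move=> hphi hF; have [h1 _ hM _] := hphi.
pose K := fun (s : ratfun N) (t : Trop q) => subfree s /\ phi s = t.
suff [] : K (\prod_(i < k) F i ^ e i) (\sum_(i < k) phi (F i) *~ e i) by [].
apply: (big_rec2 K); first by split; [exact: sf_one | exact: h1].
move=> i s t _ [hs <-]; split; first by apply: sf_mul => //; exact: subfree_exprz.
by rewrite hM ?phi_exprz //; exact: subfree_exprz.
Qed.

Lemma mxzE m k (A : 'M[int]_(m, k)) z i j : (A *~ z) i j = A i j *~ z.
Proof. by case: z => d /=; rewrite ?mxE mulmxnE. Qed.

Theorem proposition4p3p5 (n p q : nat)
  (phi : ratfun (n + p) -> Trop q)
  (psi : ratfun (n + p) -> ratfun (n + q))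
  (B : 'M[int]_n) (y : 'I_n -> Trop p)
  (Psi : 'M[int]_(n + q, n + p)) :
  sf_hom_trop phi ->
  sf_hom psi ->
  (forall i : 'I_n,
     psi (rvar (lshift p i)) = rvar (lshift q i) * trop_embed n (phi (rvar (lshift p i)))) ->
  (forall i : 'I_p,
     psi (rvar (rshift n i)) = trop_embed n (phi (rvar (rshift n i)))) ->
  skew_symmetrizable B ->
  (forall j : 'I_(n + p),
     psi (rvar j) = \prod_(i < n + q) (rvar i) ^ (Psi i j)) ->
  ext_exchange B (new_coeffs phi B y) = Psi *m ext_exchange B y.
Proof.
move=> hphi _ hL hR _ hPsi.
have Hsplit (u : 'rV[int]_n) (v : 'rV[int]_q) :
  \prod_(i < n + q) rvar i ^ (row_mx u v) 0 i =
  (\prod_(i < n) rvar (lshift q i) ^ u 0 i) * trop_embed n v.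
  rewrite big_split_ord /=; congr (_ * _); apply: eq_bigr => i _.
    by rewrite row_mxEl.
  by rewrite row_mxEr.
have Hx l : rvar (lshift q l) =
    \prod_(i < n) rvar (lshift q i) ^ (delta_mx 0 l : 'rV[int]_n) 0 i.
  rewrite (bigD1 l) //= big1 ?mulr1; first by rewrite mxE !eqxx expr1z.
  by move=> i /negbTE hi; rewrite mxE hi andbF expr0z.
have HL l i : Psi i (lshift p l) = (row_mx (delta_mx 0 l) (phi (rvar (lshift p l)))) 0 i.
  move: i; apply: (@prod_rvar_inj _ (fun i => Psi i (lshift p l)) (fun i => (row_mx (delta_mx 0 l) (phi (rvar (lshift p l)))) 0 i)) => /=.
  by rewrite -hPsi Hsplit -Hx hL.
have HR j i : Psi i (rshift n j) = (row_mx 0 (phi (rvar (rshift n j)))) 0 i.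
  move: i; apply: (@prod_rvar_inj _ (fun i => Psi i (rshift n j)) (fun i => (row_mx 0 (phi (rvar (rshift n j)))) 0 i)) => /=.
  rewrite -hPsi Hsplit hR big1 ?mul1r // => i _.
  by rewrite mxE expr0z.
apply/matrixP => a k; rewrite -[a]splitK; case: (split a) => a' /=.
- rewrite /ext_exchange col_mxEu mxE big_split_ord /=.
  under eq_bigr do rewrite HL row_mxEl col_mxEu mxE.
  under [X in _ + X]eq_bigr do rewrite HR row_mxEl col_mxEd !mxE mul0r.
  rewrite big1_eq addr0 (bigD1 a') //= eqxx mul1r big1 ?addr0 //.
  by move=> j /negbTE; rewrite eq_sym => ->; rewrite mul0r.
- rewrite /ext_exchange col_mxEd !mxE [RHS]big_split_ord /=.
  rewrite /new_coeffs /tmul /tprod /texp /trop_embed phi_prod //; last first.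
    by move=> i; exact: sf_var.
  rewrite !summxE addrC; congr (_ + _); apply: eq_bigr => i _.
    by rewrite HL row_mxEr col_mxEu mxzE mulrzz.
  by rewrite HR row_mxEr col_mxEd mxE mxzE mulrzz.
Qed.
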